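(* Let $0\le c<1$, $\theta=-\frac12\arcsin c$, $b_*$ the kink of speed $c$, and $w_c$ the weight, all as defined in the context. Suppose $\lambda\in\mathbb C$ and $\tilde B\in L^2(\mathbb R;\mathbb C^2)$ satisfy $L_{*,w_c}\tilde B=\lambda\tilde B$. Define $\beta$ and $B=(U,V)$ on $\mathbb R$ by $$\tilde B(\sqrt{1-c^2}\,X)=(\sigma_0\cos\theta+\sigma_1\sin\theta)\,\beta(X),$$ $$B(X)=e^{-c\Lambda X}\exp\Big(w_c(\sqrt{1-c^2}X)+\int_{-\infty}^X\mathcal N_p(Y)\,dY\Big)\beta(X),\qquad\Lambda=\frac{\lambda}{\sqrt{1-c^2}}.$$ Then $$U_X=(\mathcal N_0+\mathcal N_p)U+(\Lambda-2c\mathcal N_p)V,\qquad V_X=\Lambda U-(\mathcal N_0+\mathcal N_p)V.$$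
   Context: Nonlinearity: $\mathcal N:[0,\infty)\to\mathbb R$ is smooth, $\mathcal N'(s)<0$ for $s>0$, $\mathcal N(0)=1$, $\mathcal N(1)=0$, $\lim_{s\to\infty}\mathcal N(s)\in[-\infty,0)$, and $K:=-\mathcal N'(1)>0$. Kink of speed $c$: $b_*=(u_*,v_* )$ with $u_*'=\frac{u_*\mathcal N(u_*^2+v_*^2)}{\sqrt{1-c^2}}$, $v_*=u_*\tan\theta$, $u_*>0$, $u_*^2+v_*^2=\frac14$ at $x=0$. $r_0$ solves $r_0'=r_0\mathcal N(r_0^2)$, $r_0(0)=\frac12$ (the $c=0$ kink amplitude). Set $\mathcal N_0(X)=\mathcal N(r_0(X)^2)$ and $\mathcal N_p(X)=\mathcal N'(r_0(X)^2)r_0(X)^2$. Weight: $w_c$ is smooth with $w_c(x)=0$ for $x\le-1$ and $w_c(x)=\frac{K}{\sqrt{1-c^2}}x$ for $x\ge1$. Operator: $L_{*,w_c}=\Sigma(\partial_x-w_c'(x))+A_*(x)$, with $\Sigma=\begin{bmatrix}c&1\\1&c\end{bmatrix}$, $r_*^2=u_*^2+v_*^2$, and $A_*=\begin{bmatrix}2\mathcal N'(r_*^2)u_*v_*&\mathcal N(r_*^2)+2\mathcal N'(r_*^2)v_*^2\\-\mathcal N(r_*^2)-2\mathcal N'(r_*^2)u_*^2&-2\mathcal N'(r_*^2)u_*v_*\end{bmatrix}$. This is the weight-conjugated linearization of $u_t=cu_x+v_x+\mathcal N(u^2+v^2)v$, $v_t=u_x+cv_x-\mathcal N(u^2+v^2)u$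 about $b_*$. $\sigma_0$ is the $2\times2$ identity and $\sigma_1=\begin{bmatrix}0&1\\1&0\end{bmatrix}$. *)

(* Defs.v *)
From Stdlib Require Import Reals.
From Coquelicot Require Import Coquelicot.

Local Open Scope R_scope.

Definition cexp (z : C) : C := (exp (Re z) * cos (Im z), exp (Re z) * sin (Im z)).

(* C^2 vectors are pairs (C * C); real 2x2 matrix [[a,b],[c,d]] acting on them *)
Definition mv (a b c d : R) (z : C * C) : C * C :=
  ((RtoC a * fst z + RtoC b * snd z)%C, (RtoC c * fst z + RtoC d * snd z)%C).
Definition vscale (k : C) (z : C * C) : C * C := ((k * fst z)%C, (k * snd z)%C).
Definition vadd (z1 z2 : C * C) : C * C := ((fst z1 + fst z2)%C, (snd z1 + snd z2)%C).
Definition vsub (z1 z2 : C * C) : C * C := ((fst z1 - fst z2)%C, (snd z1 - snd z2)%C).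

Definition smooth_on_nonneg (N : R -> R) : Prop :=
  (forall (n : nat) (x : R), 0 < x -> ex_derive_n N n x) /\
  (forall n : nat, exists l : R, filterlim (Derive_n N n) (at_right 0) (locally l)) /\
  filterlim N (at_right 0) (locally (N 0)).

Definition admissible_nonlinearity (N : R -> R) : Prop :=
  smooth_on_nonneg N /\
  (forall s, 0 < s -> Derive N s < 0) /\
  N 0 = 1 /\ N 1 = 0 /\
  (exists l : Rbar, is_lim N p_infty l /\ Rbar_lt l 0) /\
  0 < - Derive N 1.

Definition Kconst (N : R -> R) : R := - Derive N 1.

Definition theta (c : R) : R := - (1/2) * asin c.

Definition is_kink (N : R -> R) (c : R) (u v : R -> R) : Prop :=
  (forall x, is_derive u x (u x * N (u x ^ 2 + v x ^ 2) / sqrt (1 - c ^ 2))) /\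
  (forall x, v x = u x * tan (theta c)) /\
  (forall x, 0 < u x) /\
  u 0 ^ 2 + v 0 ^ 2 = 1 / 4.

(* r0 : the c = 0 kink amplitude *)
Definition is_r0 (N : R -> R) (r0 : R -> R) : Prop :=
  (forall x, is_derive r0 x (r0 x * N (r0 x ^ 2))) /\ r0 0 = 1 / 2.

Definition is_weight (N : R -> R) (c : R) (w : R -> R) : Prop :=
  (forall (n : nat) (x : R), ex_derive_n w n x) /\
  (forall x, x <= -1 -> w x = 0) /\
  (forall x, 1 <= x -> w x = Kconst N / sqrt (1 - c ^ 2) * x).

Definition calN0 (N r0 : R -> R) (X : R) : R := N (r0 X ^ 2).
Definition calNp (N r0 : R -> R) (X : R) : R := Derive N (r0 X ^ 2) * r0 X ^ 2.

Definition Astar (N u v : R -> R) (x : R) (z : C * C) : C * C :=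
  let r2 := u x ^ 2 + v x ^ 2 in
  let N1 := Derive N r2 in
  mv (2 * N1 * u x * v x) (N r2 + 2 * N1 * v x ^ 2)
     (- N r2 - 2 * N1 * u x ^ 2) (- 2 * N1 * u x * v x) z.

(* (L_{*,w_c} Bt)(x), where dBt is the derivative of Bt:
   Sigma (dBt - w' Bt) + A_* Bt, Sigma = [[c,1],[1,c]] *)
Definition Lstar_w (N : R -> R) (c : R) (u v w : R -> R)
    (Bt dBt : R -> C * C) (x : R) : C * C :=
  vadd (mv c 1 1 c (vsub (dBt x) (vscale (RtoC (Derive w x)) (Bt x))))
       (Astar N u v x (Bt x)).

(* sigma0 cos(th) + sigma1 sin(th) *)
Definition rotmx (th : R) (z : C * C) : C * C := mv (cos th) (sin th) (sin th) (cos th) z.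

(* Bt in L^2(R; C^2) (Bt is continuous here, so the improper Riemann integral
   of |Bt|^2 agrees with the Lebesgue one) *)
Definition L2_C2 (Bt : R -> C * C) : Prop :=
  ex_RInt_gen (fun x => Cmod (fst (Bt x)) ^ 2 + Cmod (snd (Bt x)) ^ 2)
    (Rbar_locally m_infty) (Rbar_locally p_infty).

(* Main.v *)
Require Import Defs.
From Stdlib Require Import Reals Lra Nsatz.
From Coquelicot Require Import Coquelicot.

Local Open Scope R_scope.

Lemma pd_fst {U V : NormedModule R_AbsRing} (f : R -> U * V) x l :
  is_derive f x l -> is_derive (fun t => fst (f t)) x (fst l).
Proof.
  intros H. unfold is_derive in *.
  eapply filterdiff_ext_lin.
  apply (filterdiff_comp' f (fun t : U * V => fst t) x _ (fun t : U * V => fst t) H).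
  apply filterdiff_linear, is_linear_fst.
  intros y; reflexivity.
Qed.

Lemma pd_snd {U V : NormedModule R_AbsRing} (f : R -> U * V) x l :
  is_derive f x l -> is_derive (fun t => snd (f t)) x (snd l).
Proof.
  intros H. unfold is_derive in *.
  eapply filterdiff_ext_lin.
  apply (filterdiff_comp' f (fun t : U * V => snd t) x _ (fun t : U * V => snd t) H).
  apply filterdiff_linear, is_linear_snd.
  intros y; reflexivity.
Qed.

Lemma pd_pair {U V : NormedModule R_AbsRing} (f : R -> U) (g : R -> V) x l1 l2 :
  is_derive f x l1 -> is_derive g x l2 -> is_derive (fun t => (f t, g t)) x (l1, l2).
Proof.
  intros H1 H2. unfold is_derive in *.
  eapply filterdiff_ext_lin.
  apply (filterdiff_comp'_2 f g (fun a b => (a, b)) x _ _ (fun a b => (a, b)) H1 H2).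
  eapply filterdiff_ext_lin.
  eapply filterdiff_ext. 2: apply filterdiff_id.
  intros [a b]; reflexivity.
  intros [a b]; reflexivity.
  intros y; reflexivity.
Qed.

Lemma Cd_intro (f : R -> C) x (l : C) :
  is_derive (fun t => fst (f t)) x (fst l) -> is_derive (fun t => snd (f t)) x (snd l) ->
  is_derive (K := R_AbsRing) (V := C_R_NormedModule) f x l.
Proof.
  intros H1 H2.
  apply is_derive_ext with (fun t => (fst (f t), snd (f t))).
  intros t; destruct (f t); reflexivity.
  destruct l as [l1 l2]. apply (pd_pair _ _ _ _ _ H1 H2).
Qed.

Lemma Cd_fst (f : R -> C) x (l : C) :
  is_derive (K := R_AbsRing) (V := C_R_NormedModule) f x l -> is_derive (fun t => fst (f t)) x (fst l).
Proof. intros H. exact (pd_fst (U:=R_NormedModule) (V:=R_NormedModule) f x l H). Qed.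
Lemma Cd_snd (f : R -> C) x (l : C) :
  is_derive (K := R_AbsRing) (V := C_R_NormedModule) f x l -> is_derive (fun t => snd (f t)) x (snd l).
Proof. intros H. exact (pd_snd (U:=R_NormedModule) (V:=R_NormedModule) f x l H). Qed.

Lemma Cd_mult (f g : R -> C) x (df dg : C) :
  is_derive (K := R_AbsRing) (V := C_R_NormedModule) f x df ->
  is_derive (K := R_AbsRing) (V := C_R_NormedModule) g x dg ->
  is_derive (K := R_AbsRing) (V := C_R_NormedModule) (fun t => (f t * g t)%C) x (df * g x + f x * dg)%C.
Proof.
  intros Hf Hg.
  pose proof (Cd_fst _ _ _ Hf) as f1. pose proof (Cd_snd _ _ _ Hf) as f2.
  pose proof (Cd_fst _ _ _ Hg) as g1. pose proof (Cd_snd _ _ _ Hg) as g2.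
  apply Cd_intro; simpl.
  - eapply is_derive_ext. intros t. reflexivity.
    evar (l : R). replace (fst df * fst (g x) - snd df * snd (g x) +
      (fst (f x) * fst dg - snd (f x) * snd dg)) with l.
    apply @is_derive_minus; (apply @is_derive_mult; [eassumption|eassumption|intros; apply Rmult_comm]).
    unfold l, minus, plus, opp, mult; simpl; ring.
  - evar (l : R). replace (fst df * snd (g x) + snd df * fst (g x) +
      (fst (f x) * snd dg + snd (f x) * fst dg)) with l.
    apply @is_derive_plus; (apply @is_derive_mult; [eassumption|eassumption|intros; apply Rmult_comm]).
    unfold l, minus, plus, opp, mult; simpl; ring.
Qed.

Notation CD := (is_derive (K := R_AbsRing) (V := C_R_NormedModule)).

Lemma Rd_ok (f : R -> R) x l l' : is_derive f x l -> l = l' -> is_derive f x l'.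
Proof. intros H ->; exact H. Qed.

Lemma Cd_plus (f g : R -> C) x df dg : CD f x df -> CD g x dg ->
  CD (fun t => (f t + g t)%C) x (df + dg)%C.
Proof.
  intros Hf Hg. apply Cd_intro; simpl.
  apply (@is_derive_plus R_AbsRing R_NormedModule); [apply (Cd_fst _ _ _ Hf)|apply (Cd_fst _ _ _ Hg)].
  apply (@is_derive_plus R_AbsRing R_NormedModule); [apply (Cd_snd _ _ _ Hf)|apply (Cd_snd _ _ _ Hg)].
Qed.

Lemma Cd_minus (f g : R -> C) x df dg : CD f x df -> CD g x dg ->
  CD (fun t => (f t - g t)%C) x (df - dg)%C.
Proof.
  intros Hf Hg. apply Cd_intro; simpl.
  apply (@is_derive_minus R_AbsRing R_NormedModule); [apply (Cd_fst _ _ _ Hf)|apply (Cd_fst _ _ _ Hg)].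
  apply (@is_derive_minus R_AbsRing R_NormedModule); [apply (Cd_snd _ _ _ Hf)|apply (Cd_snd _ _ _ Hg)].
Qed.

Lemma Cd_const (k : C) x : CD (fun _ => k) x (RtoC 0).
Proof.
  apply Cd_intro; simpl; apply (@is_derive_const R_AbsRing R_NormedModule).
Qed.

Lemma Cd_RtoC (g : R -> R) x l : is_derive g x l -> CD (fun t => RtoC (g t)) x (RtoC l).
Proof.
  intros H. apply Cd_intro; simpl. exact H. apply (@is_derive_const R_AbsRing R_NormedModule).
Qed.

Lemma Cd_scal (f : R -> C) (a x : R) l : CD f (a * x) l -> CD (fun t => f (a * t)) x (RtoC a * l)%C.
Proof.
  intros H. apply Cd_intro.
  - apply Rd_ok with (scal a (fst l)).
    apply (is_derive_comp (fun y => fst (f y)) (fun t => a * t)).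
    apply (Cd_fst _ _ _ H).
    auto_derive; [exact I | ring].
    simpl. unfold scal; simpl; unfold mult; simpl; ring.
  - apply Rd_ok with (scal a (snd l)).
    apply (is_derive_comp (fun y => snd (f y)) (fun t => a * t)).
    apply (Cd_snd _ _ _ H).
    auto_derive; [exact I | ring].
    simpl. unfold scal; simpl; unfold mult; simpl; ring.
Qed.

Lemma Cd_expi (h k : R -> R) x dh dk : is_derive h x dh -> is_derive k x dk ->
  CD (fun t => (exp (h t) * cos (k t), exp (h t) * sin (k t))) x
     (Cmult (dh, dk) (exp (h x) * cos (k x), exp (h x) * sin (k x))).
Proof.
  intros Hh Hk. apply Cd_intro; simpl.
  - apply Rd_ok with ((dh * exp (h x)) * cos (k x) + exp (h x) * (dk * - sin (k x))).
    apply (is_derive_mult (fun t => exp (h t)) (fun t => cos (k t))).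
    apply (is_derive_comp exp h). apply is_derive_exp. exact Hh.
    apply (is_derive_comp cos k). apply is_derive_cos. exact Hk.
    intros; apply Rmult_comm.
    unfold scal; simpl; unfold mult; simpl; ring.
  - apply Rd_ok with ((dh * exp (h x)) * sin (k x) + exp (h x) * (dk * cos (k x))).
    apply (is_derive_mult (fun t => exp (h t)) (fun t => sin (k t))).
    apply (is_derive_comp exp h). apply is_derive_exp. exact Hh.
    apply (is_derive_comp sin k). apply is_derive_sin. exact Hk.
    intros; apply Rmult_comm.
    unfold scal; simpl; unfold mult; simpl; ring.
Qed.

Lemma cont_eps (g : R -> R) x : ex_derive g x -> forall eps, 0 < eps ->
  exists d, 0 < d /\ forall y, Rabs (y - x) < d -> Rabs (g y - g x) < eps.
Proof.
  intros H eps He. pose proof (ex_derive_continuous g x H) as Hc.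
  destruct (Hc (ball (g x) (mkposreal eps He)) (locally_ball _ _)) as [d Hd].
  exists d. split. apply cond_pos. intros y Hy. apply (Hd y Hy).
Qed.

Definition loc_lip (f : R -> R) := forall y0, 0 < y0 -> exists d L, 0 < d /\ 0 <= L /\
  forall a b, Rabs (a - y0) < d -> Rabs (b - y0) < d -> Rabs (f a - f b) <= L * Rabs (a - b).

Lemma gron_step (D F L sg ex dt : R) : sg * sg = 1 -> 0 <= L -> 0 < ex ->
  Rabs F <= L * Rabs D -> 0 <= sg * dt ->
  (ex * (2 * D * F - 2 * L * sg * D ^ 2)) * dt <= 0.
Proof.
  intros Hs HL He HF Hdt.
  assert (Hk : sg * (D * F) <= L * D ^ 2).
  { assert (Rabs (sg * (D * F)) = Rabs D * Rabs F).
    { rewrite !Rabs_mult. assert (Rabs sg = 1).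
      { destruct (Rle_dec 0 sg). rewrite Rabs_right by lra. nra.
        rewrite Rabs_left by lra. nra. }
      rewrite H; ring. }
    assert (sg * (D * F) <= Rabs (sg * (D * F))) by apply Rle_abs.
    assert (Rabs D * Rabs F <= L * (Rabs D * Rabs D)).
    { rewrite <- Rmult_assoc. rewrite (Rmult_comm L). rewrite Rmult_assoc.
      apply Rmult_le_compat_l. apply Rabs_pos. lra. }
    assert (Rabs D * Rabs D = D ^ 2). { rewrite <- Rabs_mult. simpl. rewrite Rmult_1_r.
      apply Rabs_right. nra. }
    nra. }
  replace ((ex * (2 * D * F - 2 * L * sg * D ^ 2)) * dt) with
    (2 * ex * ((sg * (D * F) - L * D ^ 2) * (sg * dt))).
  2: { assert (E : (ex * (2 * D * F - 2 * L * sg * D ^ 2)) * dt -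
     (2 * ex * ((sg * (D * F) - L * D ^ 2) * (sg * dt))) = 2*ex*D*F*dt*(1 - sg*sg)) by ring.
       rewrite Hs in E. lra. }
  assert (0 < 2 * ex) by lra.
  assert ((sg * (D * F) - L * D ^ 2) * (sg * dt) <= 0) by nra. nra.
Qed.

Lemma abs_between (a t c : R) : Rmin a t <= c <= Rmax a t -> Rabs (c - a) <= Rabs (t - a).
Proof.
  intros [H1 H2]. unfold Rmin, Rmax in *. destruct (Rle_dec a t).
  rewrite !Rabs_right by lra. lra.
  rewrite !Rabs_left1 by lra. lra.
Qed.

Lemma local_uniq f (Hf : loc_lip f) (y1 y2 : R -> R)
  (H1 : forall t, is_derive y1 t (f (y1 t))) (H2 : forall t, is_derive y2 t (f (y2 t)))
  t1 (Heq : y1 t1 = y2 t1) (Hp : 0 < y2 t1) :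
  exists e, 0 < e /\ forall t, Rabs (t - t1) < e -> y1 t = y2 t.
Proof.
  destruct (Hf _ Hp) as (d & L & Hd & HL & Hlip).
  destruct (cont_eps y1 t1 (ex_intro _ _ (H1 t1)) d Hd) as (d1 & Hd1 & C1).
  destruct (cont_eps y2 t1 (ex_intro _ _ (H2 t1)) d Hd) as (d2 & Hd2 & C2).
  exists (Rmin d1 d2). split. apply Rmin_pos; auto.
  intros t Ht.
  assert (Ht1 : Rabs (t - t1) < d1) by (eapply Rlt_le_trans; [exact Ht| apply Rmin_l]).
  assert (Ht2 : Rabs (t - t1) < d2) by (eapply Rlt_le_trans; [exact Ht| apply Rmin_r]).
  set (sg := if Rle_dec t1 t then 1 else -1).
  assert (Hsg : sg * sg = 1) by (unfold sg; destruct (Rle_dec t1 t); ring).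
  assert (Hsd : 0 <= sg * (t - t1)) by (unfold sg; destruct (Rle_dec t1 t); lra).
  set (E := fun s => (y1 s - y2 s) ^ 2 * exp (- 2 * L * sg * (s - t1))).
  set (dE := fun s => exp (- 2 * L * sg * (s - t1)) *
     (2 * (y1 s - y2 s) * (f (y1 s) - f (y2 s)) - 2 * L * sg * (y1 s - y2 s) ^ 2)).
  assert (HdE : forall x, is_derive E x (dE x)).
  { intros x. unfold E, dE.
    assert (ex_derive y1 x) by (eexists; apply H1).
    assert (ex_derive y2 x) by (eexists; apply H2).
    auto_derive. tauto.
    replace (Derive (fun x => y1 x) x) with (f (y1 x)) by (symmetry; apply is_derive_unique; apply H1).
    replace (Derive (fun x => y2 x) x) with (f (y2 x)) by (symmetry; apply is_derive_unique; apply H2).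
    unfold Rminus. ring. }
  destruct (MVT_gen E t1 t dE) as (c & Hc & HE).
  { intros x _. apply HdE. }
  { intros x _. apply continuity_pt_filterlim. apply (ex_derive_continuous (K:=R_AbsRing) (V:=R_NormedModule)). eexists; apply HdE. }
  assert (Hct : Rabs (c - t1) <= Rabs (t - t1)) by (apply abs_between; exact Hc).
  assert (B1 : Rabs (y1 c - y2 t1) < d).
  { rewrite <- Heq. apply C1. lra. }
  assert (B2 : Rabs (y2 c - y2 t1) < d). { apply C2. lra. }
  assert (HE1 : E t1 = 0). { unfold E. rewrite Heq. simpl. ring. }
  assert (Hneg : dE c * (t - t1) <= 0).
  { unfold dE. apply gron_step; [auto|auto|apply exp_pos|apply Hlip; auto|auto]. }
  assert (HEt : E t <= 0) by lra.
  unfold E in HEt.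
  assert (0 < exp (- 2 * L * sg * (t - t1))) by apply exp_pos.
  assert ((y1 t - y2 t) ^ 2 <= 0).
  { destruct (Rle_dec ((y1 t - y2 t) ^ 2) 0). auto.
    assert (0 < (y1 t - y2 t) ^ 2 * exp (- 2 * L * sg * (t - t1))).
    apply Rmult_lt_0_compat; lra. lra. }
  nra.
Qed.

Lemma global_fwd f (Hf : loc_lip f) (y1 y2 : R -> R)
  (H1 : forall t, is_derive y1 t (f (y1 t))) (H2 : forall t, is_derive y2 t (f (y2 t)))
  (Hpos : forall t, 0 < y2 t) t0 (Heq : y1 t0 = y2 t0) :
  forall t, t0 <= t -> y1 t = y2 t.
Proof.
  intros T HT. destruct (Req_dec (y1 T) (y2 T)) as [ok|Hne]; auto. exfalso.
  set (S := fun x => t0 <= x /\ forall s, t0 <= s <= x -> y1 s = y2 s).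
  assert (Hb : bound S).
  { exists T. intros x [Hx1 Hx2]. destruct (Rle_dec x T) as [l|n]; auto.
    exfalso. apply Hne. apply Hx2. lra. }
  assert (Hne0 : exists x, S x).
  { exists t0. split. lra. intros s Hs. replace s with t0 by lra. exact Heq. }
  destruct (completeness S Hb Hne0) as [m [Hub Hleast]].
  assert (Hm0 : t0 <= m) by (apply Hub; destruct Hne0; split; [lra|]; intros s Hs;
     replace s with t0 by lra; exact Heq).
  assert (Hlt : forall s, t0 <= s < m -> y1 s = y2 s).
  { intros s Hs. destruct (Req_dec (y1 s) (y2 s)) as [e|n]; auto. exfalso.
    assert (m <= s). { apply Hleast. intros x [Hx1 Hx2].
      destruct (Rle_dec x s) as [l|nl]; auto. exfalso. apply n. apply Hx2. lra. }
    lra. }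
  assert (Hm : y1 m = y2 m).
  { destruct (Req_dec m t0) as [e|ne]. rewrite e; exact Heq.
    destruct (Req_dec (y1 m) (y2 m)) as [e|n]; auto. exfalso.
    assert (Hp : 0 < Rabs (y1 m - y2 m) / 2).
    { assert (0 < Rabs (y1 m - y2 m)) by (apply Rabs_pos_lt; lra). lra. }
    destruct (cont_eps y1 m (ex_intro _ _ (H1 m)) _ Hp) as (d1 & Hd1 & C1).
    destruct (cont_eps y2 m (ex_intro _ _ (H2 m)) _ Hp) as (d2 & Hd2 & C2).
    set (s := Rmax t0 (m - Rmin d1 d2 / 2)).
    assert (Hmin : 0 < Rmin d1 d2) by (apply Rmin_pos; auto).
    assert (Hs1 : t0 <= s) by apply Rmax_l.
    assert (Hs2 : s < m). { unfold s, Rmax. destruct (Rle_dec t0 (m - Rmin d1 d2 / 2)); lra. }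
    assert (Hs3 : m - Rmin d1 d2 / 2 <= s) by apply Rmax_r.
    assert (Hsm : Rabs (s - m) < Rmin d1 d2). { rewrite Rabs_left by lra. lra. }
    assert (A1 := C1 s ltac:(eapply Rlt_le_trans; [exact Hsm|apply Rmin_l])).
    assert (A2 := C2 s ltac:(eapply Rlt_le_trans; [exact Hsm|apply Rmin_r])).
    rewrite (Hlt s ltac:(lra)) in A1.
    assert (Rabs (y1 m - y2 m) <= Rabs (y2 s - y1 m) + Rabs (y2 s - y2 m)).
    { replace (y1 m - y2 m) with (- (y2 s - y1 m) + (y2 s - y2 m)) by ring.
      eapply Rle_trans. apply Rabs_triang. rewrite Rabs_Ropp. lra. }
    lra. }
  destruct (local_uniq f Hf y1 y2 H1 H2 m Hm (Hpos m)) as (e & He & Hloc).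
  assert (m + e / 2 <= m).
  { apply Hub. split. lra. intros s Hs. destruct (Rlt_dec s m) as [l|nl].
    apply Hlt; lra. apply Hloc. rewrite Rabs_right; lra. }
  lra.
Qed.

Lemma global_uniq f (Hf : loc_lip f) (y1 y2 : R -> R)
  (H1 : forall t, is_derive y1 t (f (y1 t))) (H2 : forall t, is_derive y2 t (f (y2 t)))
  (Hpos : forall t, 0 < y2 t) t0 (Heq : y1 t0 = y2 t0) :
  forall t, y1 t = y2 t.
Proof.
  intros t. destruct (Rle_dec t0 t) as [l|n].
  apply (global_fwd f Hf y1 y2 H1 H2 Hpos t0 Heq t l).
  set (g := fun y => - f y).
  assert (Hg : loc_lip g).
  { intros y0 Hy0. destruct (Hf y0 Hy0) as (d & L & Hd & HL & Hl). exists d, L.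
    split; auto. split; auto. intros a b Ha Hb. unfold g.
    replace (- f a - - f b) with (- (f a - f b)) by ring. rewrite Rabs_Ropp. auto. }
  assert (K1 : forall s, is_derive (fun s => y1 (- s)) s (g (y1 (- s)))).
  { intros s. unfold g. apply Rd_ok with (scal (-1) (f (y1 (- s)))).
    apply (is_derive_comp y1 (fun s => - s)). apply H1.
    auto_derive; [exact I| ring].
    unfold scal; simpl; unfold mult; simpl; ring. }
  assert (K2 : forall s, is_derive (fun s => y2 (- s)) s (g (y2 (- s)))).
  { intros s. unfold g. apply Rd_ok with (scal (-1) (f (y2 (- s)))).
    apply (is_derive_comp y2 (fun s => - s)). apply H2.
    auto_derive; [exact I| ring].
    unfold scal; simpl; unfold mult; simpl; ring. }
  assert (E := global_fwd g Hg (fun s => y1 (- s)) (fun s => y2 (- s)) K1 K2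
     (fun s => Hpos (- s)) (- t0) ltac:(cbv beta; rewrite !Ropp_involutive; exact Heq) (- t) ltac:(lra)).
  simpl in E. rewrite !Ropp_involutive in E. exact E.
Qed.

Lemma Ccancel (a : R) (x y : C) : a <> 0 -> (RtoC a * x = RtoC a * y)%C -> x = y.
Proof.
  intros Ha H.
  assert (Ha' : RtoC a <> RtoC 0). { intros E. apply Ha. injection E; auto. }
  rewrite <- (Cmult_1_l x), <- (Cmult_1_l y).
  rewrite <- (Cinv_l (RtoC a)) by exact Ha'.
  rewrite <- !Cmult_assoc, H. reflexivity.
Qed.

Ltac cdist := repeat progress (rewrite ?RtoC_plus, ?RtoC_minus, ?RtoC_mult, ?RtoC_opp, ?RtoC_pow).

Lemma coef4 (K1 K2 K3 K4 M1 M2 M3 M4 : R) (L b1 b2 : C) :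
  K1 = M1 -> K2 = M2 -> K3 = M3 -> K4 = M4 ->
  (RtoC K1 * b1 + RtoC K2 * b2 + RtoC K3 * (L * b1) + RtoC K4 * (L * b2))%C =
  (RtoC M1 * b1 + RtoC M2 * b2 + RtoC M3 * (L * b1) + RtoC M4 * (L * b2))%C.
Proof. intros -> -> -> ->. reflexivity. Qed.

Lemma alg (c s cs sn r u v nn p W a11 a12 a21 a22 : R) (lam L b1 b2 d1 d2 be1 be2 : C)
  (Hs : 0 < s) (R1 : cs^2 - sn^2 = s) (R2 : 2*sn*cs = -c) (R3 : cs^2+sn^2 = 1)
  (Hu : u = r*cs) (Hv : v = r*sn) (Hlam : lam = (RtoC s * L)%C)
  (Ha11 : a11 = 2*p*u*v) (Ha12 : a12 = nn + 2*p*v^2) (Ha21 : a21 = - nn - 2*p*u^2)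
  (Ha22 : a22 = - (2*p*u*v))
  (Hb1 : b1 = (RtoC cs * be1 + RtoC sn * be2)%C) (Hb2 : b2 = (RtoC sn * be1 + RtoC cs * be2)%C)
  (E1 : ((RtoC c * (d1 - RtoC W * b1) + RtoC 1 * (d2 - RtoC W * b2)) +
          (RtoC a11 * b1 + RtoC a12 * b2))%C = (lam * b1)%C)
  (E2 : ((RtoC 1 * (d1 - RtoC W * b1) + RtoC c * (d2 - RtoC W * b2)) +
          (RtoC a21 * b1 + RtoC a22 * b2))%C = (lam * b2)%C) :
  (RtoC cs * d1 - RtoC sn * d2)%C =
     (RtoC (s*W + nn + 2*(p*r^2)) * be1 - RtoC c * L * be1 + L * be2 - RtoC (2*c*(p*r^2)) * be2)%C /\
  (RtoC cs * d2 - RtoC sn * d1)%C =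
     (L * be1 + RtoC (s*W - nn) * be2 - RtoC c * L * be2)%C.
Proof.
  assert (Hs2 : s^2 = 1 - c^2) by (clear - R1 R2 R3; simpl in *; nsatz).
  set (e1 := (d1 - RtoC W * b1)%C). set (e2 := (d2 - RtoC W * b2)%C).
  set (g1 := (lam * b1 - (RtoC a11 * b1 + RtoC a12 * b2))%C).
  set (g2 := (lam * b2 - (RtoC a21 * b1 + RtoC a22 * b2))%C).
  assert (Hg1 : g1 = (RtoC c * e1 + e2)%C) by (unfold g1; rewrite <- E1; fold e1 e2; ring).
  assert (Hg2 : g2 = (e1 + RtoC c * e2)%C) by (unfold g2; rewrite <- E2; fold e1 e2; ring).
  assert (S1 : (RtoC (s^2) * e1 = g2 - RtoC c * g1)%C).
  { rewrite Hg1, Hg2, Hs2. cdist. ring. }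
  assert (S2 : (RtoC (s^2) * e2 = g1 - RtoC c * g2)%C).
  { rewrite Hg1, Hg2, Hs2. cdist. ring. }
  assert (Hsn : s^2 <> 0) by (apply pow_nonzero; lra).
  split; apply (Ccancel (s^2)); auto.
  - transitivity (RtoC cs * (RtoC (s^2) * e1) - RtoC sn * (RtoC (s^2) * e2)
       + RtoC (s^2) * RtoC W * (RtoC cs * b1 - RtoC sn * b2))%C.
    { unfold e1, e2. ring. }
    rewrite S1, S2. unfold g1, g2. rewrite Hlam, Hb1, Hb2.
    transitivity (RtoC ((c*cs + sn)*(a11*cs + a12*sn) - (cs + c*sn)*(a21*cs + a22*sn) + s^2*W*(cs*cs - sn*sn)) * be1
      + RtoC ((c*cs + sn)*(a11*sn + a12*cs) - (cs + c*sn)*(a21*sn + a22*cs) + s^2*W*(cs*sn - sn*cs)) * be2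
      + RtoC (s*((cs + c*sn)*sn - (c*cs + sn)*cs)) * (L * be1)
      + RtoC (s*((cs + c*sn)*cs - (c*cs + sn)*sn)) * (L * be2))%C.
    { cdist. ring. }
    transitivity (RtoC (s^2*(s*W + nn + 2*(p*r^2))) * be1 + RtoC (-(s^2*(2*c*(p*r^2)))) * be2
      + RtoC (-(s^2*c)) * (L * be1) + RtoC (s^2) * (L * be2))%C.
    2: { cdist. ring. }
    apply coef4; subst a11 a12 a21 a22 u v; clear - R1 R2 R3; simpl in *; nsatz.
  - transitivity (RtoC cs * (RtoC (s^2) * e2) - RtoC sn * (RtoC (s^2) * e1)
       + RtoC (s^2) * RtoC W * (RtoC cs * b2 - RtoC sn * b1))%C.
    { unfold e1, e2. ring. }
    rewrite S1, S2. unfold g1, g2. rewrite Hlam, Hb1, Hb2.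
    transitivity (RtoC (-(cs + c*sn)*(a11*cs + a12*sn) + (c*cs + sn)*(a21*cs + a22*sn) + s^2*W*(cs*sn - sn*cs)) * be1
      + RtoC (-(cs + c*sn)*(a11*sn + a12*cs) + (c*cs + sn)*(a21*sn + a22*cs) + s^2*W*(cs*cs - sn*sn)) * be2
      + RtoC (s*((cs + c*sn)*cs - (c*cs + sn)*sn)) * (L * be1)
      + RtoC (s*((cs + c*sn)*sn - (c*cs + sn)*cs)) * (L * be2))%C.
    { cdist. ring. }
    transitivity (RtoC 0 * be1 + RtoC (s^2*(s*W - nn)) * be2
      + RtoC (s^2) * (L * be1) + RtoC (-(s^2*c)) * (L * be2))%C.
    2: { cdist. ring. }
    apply coef4; subst a11 a12 a21 a22 u v; clear - R1 R2 R3; simpl in *; nsatz.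
Qed.

Section NF.
Variable Nf : R -> R.
Hypothesis HN : admissible_nonlinearity Nf.

Lemma N_ex x : 0 < x -> ex_derive Nf x.
Proof. intros H. destruct HN as [[Hs _] _]. exact (Hs 1%nat x H). Qed.

Lemma N_ex2 x : 0 < x -> ex_derive (Derive Nf) x.
Proof. intros H. destruct HN as [[Hs _] _]. exact (Hs 2%nat x H). Qed.

Lemma N_cpt x : 0 < x -> continuity_pt Nf x.
Proof.
  intros H. apply continuity_pt_filterlim.
  apply (ex_derive_continuous (K:=R_AbsRing) (V:=R_NormedModule)). apply N_ex; auto.
Qed.

Lemma N_lt a b : 0 < a -> a < b -> Nf b < Nf a.
Proof.
  intros Ha Hab.
  destruct (MVT_gen Nf a b (Derive Nf)) as (c & Hc & E).
  { intros x Hx. apply Derive_correct. apply N_ex.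
    unfold Rmin in Hx; destruct (Rle_dec a b); lra. }
  { intros x Hx. apply N_cpt. unfold Rmin in Hx; destruct (Rle_dec a b); lra. }
  assert (Hc0 : 0 < c) by (unfold Rmin in Hc; destruct (Rle_dec a b); lra).
  destruct HN as (_ & Hneg & _).
  specialize (Hneg c Hc0). nra.
Qed.

Lemma N_le a b : 0 < a -> a <= b -> Nf b <= Nf a.
Proof. intros Ha Hab. destruct (Req_dec a b). subst; lra. left; apply N_lt; lra. Qed.

Lemma N_pos y : 0 <= y < 1 -> 0 < Nf y.
Proof.
  intros [H1 H2]. destruct HN as (_ & _ & H0 & H1' & _).
  destruct (Req_dec y 0). subst; lra.
  assert (Nf 1 < Nf y) by (apply N_lt; lra). lra.
Qed.

Lemma sqr_1 (y : R) : y * (y * 1) = y ^ 2.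
Proof. ring. Qed.

Definition fN (y : R) := y * Nf (y ^ 2).
Definition gN (y : R) := Nf (y ^ 2) + 2 * y ^ 2 * Derive Nf (y ^ 2).

Lemma fN_der y : 0 < y -> is_derive fN y (gN y).
Proof.
  intros Hy. unfold fN, gN.
  assert (Hy2 : 0 < y ^ 2) by (apply pow_lt; auto).
  auto_derive. rewrite (sqr_1 y). apply N_ex; auto.
  rewrite (sqr_1 y). set (D := Derive _ _). ring.
Qed.

Lemma gN_ex y : 0 < y -> ex_derive gN y.
Proof.
  intros Hy. unfold gN.
  assert (Hy2 : 0 < y ^ 2) by (apply pow_lt; auto).
  auto_derive. rewrite (sqr_1 y). split. apply N_ex; auto.
  split; auto. apply N_ex2; auto.
Qed.

Lemma fN_lip : loc_lip fN.
Proof.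
  intros y0 Hy0.
  destruct (cont_eps gN y0 (gN_ex y0 Hy0) 1 ltac:(lra)) as (d0 & Hd0 & C0).
  exists (Rmin d0 (y0 / 2)), (Rabs (gN y0) + 1).
  assert (Hdp : 0 < Rmin d0 (y0 / 2)) by (apply Rmin_pos; lra).
  split; auto. split. assert (0 <= Rabs (gN y0)) by apply Rabs_pos. lra.
  intros a b Ha Hb.
  assert (Hd1 : Rmin d0 (y0 / 2) <= d0) by apply Rmin_l.
  assert (Hd2 : Rmin d0 (y0 / 2) <= y0 / 2) by apply Rmin_r.
  assert (Hin : forall x, Rmin a b <= x <= Rmax a b -> Rabs (x - y0) < Rmin d0 (y0 / 2)).
  { intros x Hx. unfold Rmin, Rmax in Hx. apply Rabs_def1.
    apply Rabs_def2 in Ha. apply Rabs_def2 in Hb. destruct (Rle_dec a b); lra.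
    apply Rabs_def2 in Ha. apply Rabs_def2 in Hb. destruct (Rle_dec a b); lra. }
  assert (Hpos : forall x, Rmin a b <= x <= Rmax a b -> 0 < x).
  { intros x Hx. specialize (Hin x Hx). apply Rabs_def2 in Hin. lra. }
  destruct (MVT_gen fN a b gN) as (c & Hc & E).
  { intros x Hx. apply fN_der. apply Hpos. lra. }
  { intros x Hx. apply continuity_pt_filterlim.
    apply (ex_derive_continuous (K:=R_AbsRing) (V:=R_NormedModule)).
    eexists. apply fN_der. apply Hpos; auto. }
  assert (Hg : Rabs (gN c) <= Rabs (gN y0) + 1).
  { assert (Rabs (gN c - gN y0) < 1) by (apply C0; specialize (Hin c Hc); lra).
    assert (Rabs (gN c) <= Rabs (gN c - gN y0) + Rabs (gN y0)).
    { replace (gN c) with ((gN c - gN y0) + gN y0) at 1 by ring. apply Rabs_triang. }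
    lra. }
  replace (fN a - fN b) with (- (fN b - fN a)) by ring. rewrite Rabs_Ropp, E.
  rewrite Rabs_mult. rewrite (Rabs_minus_sym b a).
  apply Rmult_le_compat_r. apply Rabs_pos. exact Hg.
Qed.

End NF.

Lemma trig_facts c : 0 <= c < 1 ->
  0 < cos (theta c) /\ 2 * sin (theta c) * cos (theta c) = - c /\
  cos (theta c) ^ 2 - sin (theta c) ^ 2 = sqrt (1 - c ^ 2) /\
  cos (theta c) ^ 2 + sin (theta c) ^ 2 = 1.
Proof.
  intros Hc. unfold theta.
  assert (Hb := asin_bound c). assert (HPI := PI_RGT_0).
  assert (Hc1 : -1 <= c <= 1) by lra.
  assert (E2 : 2 * (- (1/2) * asin c) = - asin c) by field.
  split. apply cos_gt_0; lra.
  split. rewrite <- sin_2a, E2, sin_neg, sin_asin; auto.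
  split. replace (cos (- (1 / 2) * asin c) ^ 2 - sin (- (1 / 2) * asin c) ^ 2) with
     (cos (- (1 / 2) * asin c) * cos (- (1 / 2) * asin c) - sin (- (1 / 2) * asin c) * sin (- (1 / 2) * asin c)) by ring.
  rewrite <- cos_2a, E2, cos_neg, cos_asin; auto. unfold Rsqr. f_equal. ring.
  rewrite Rplus_comm. pose proof (sin2_cos2 (- (1 / 2) * asin c)). unfold Rsqr in H. simpl. lra.
Qed.

Section Kink.
Variable Nf : R -> R.
Hypothesis HN : admissible_nonlinearity Nf.
Variable c : R.
Hypothesis Hc0 : 0 <= c.
Hypothesis Hc1 : c < 1.
Variables u v r0 : R -> R.
Hypothesis Hkink : is_kink Nf c u v.
Hypothesis Hr0 : is_r0 Nf r0.

Let s := sqrt (1 - c ^ 2).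
Let cs := cos (theta c).
Let sn := sin (theta c).

Lemma s_pos : 0 < s.
Proof. unfold s. apply sqrt_lt_R0. nra. Qed.

Definition rho X := u (s * X) / cs.

Lemma cs_pos : 0 < cs.
Proof. destruct (trig_facts c) as [H _]; auto. Qed.

Lemma u_eq X : u (s * X) = rho X * cs.
Proof. unfold rho. assert (H := cs_pos). field. lra. Qed.

Lemma v_eq X : v (s * X) = rho X * sn.
Proof.
  destruct Hkink as (_ & Hv & _). rewrite Hv, u_eq. unfold tan. fold sn cs.
  assert (H := cs_pos). field. lra.
Qed.

Lemma uv_r X : u (s * X) ^ 2 + v (s * X) ^ 2 = rho X ^ 2.
Proof.
  rewrite u_eq, v_eq. destruct (trig_facts c) as (_ & _ & _ & H); auto.
  fold cs sn in H. transitivity (rho X ^ 2 * (cs ^ 2 + sn ^ 2)). ring. rewrite H; ring.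
Qed.

Lemma rho_pos X : 0 < rho X.
Proof.
  unfold rho. destruct Hkink as (_ & _ & Hu & _). apply Rdiv_lt_0_compat; auto. apply cs_pos.
Qed.

Lemma rho_der X : is_derive rho X (fN Nf (rho X)).
Proof.
  destruct Hkink as (Hd & _).
  assert (Hs := s_pos). assert (Hcs := cs_pos).
  assert (E := uv_r X).
  unfold rho at 1. auto_derive. eexists; apply Hd.
  replace (Derive (fun x => u x) (s * X)) with (u (s * X) * Nf (u (s * X) ^ 2 + v (s * X) ^ 2) / sqrt (1 - c ^ 2))
    by (symmetry; apply is_derive_unique; apply Hd).
  rewrite E. unfold fN. fold s. unfold rho. field. split; lra.
Qed.

Lemma rho0 : rho 0 = 1 / 2.
Proof.
  destruct Hkink as (_ & _ & _ & H0).
  assert (E := uv_r 0). rewrite Rmult_0_r in E. rewrite H0 in E.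
  assert (P := rho_pos 0). nra.
Qed.

Lemma r0_rho X : r0 X = rho X.
Proof.
  destruct Hr0 as [Hd H0].
  apply (global_uniq (fN Nf) (fN_lip Nf HN) r0 rho Hd rho_der rho_pos 0).
  rewrite H0, rho0. reflexivity.
Qed.

Lemma rho_ne1 X : rho X <> 1.
Proof.
  intros E.
  assert (K : forall t, is_derive (fun _ : R => 1) t (fN Nf ((fun _ : R => 1) t))).
  { intros t. unfold fN. destruct HN as (_ & _ & _ & H1 & _).
    rewrite pow1, H1, Rmult_0_r. apply (is_derive_const (K:=R_AbsRing) (V:=R_NormedModule)). }
  assert (G := global_uniq (fN Nf) (fN_lip Nf HN) rho (fun _ => 1) rho_der K
    (fun _ => Rlt_0_1) X E 0).
  rewrite rho0 in G. lra.
Qed.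

Lemma rho_cont X : continuous rho X.
Proof. apply (ex_derive_continuous (K:=R_AbsRing) (V:=R_NormedModule)). eexists; apply rho_der. Qed.

Lemma rho_lt1 X : rho X < 1.
Proof.
  destruct (Rlt_dec (rho X) 1) as [l|n]; auto. exfalso.
  assert (Hgt : rho X > 1) by (assert (H := rho_ne1 X); lra).
  destruct (IVT_gen_consistent rho 0 X 1 rho_cont) as (y & _ & Hy).
  { rewrite rho0. unfold Rmin, Rmax. destruct (Rle_dec (1/2) (rho X)); lra. }
  exact (rho_ne1 y Hy).
Qed.

Lemma r0_bounds X : 0 < r0 X < 1.
Proof. rewrite r0_rho. split. apply rho_pos. apply rho_lt1. Qed.

Lemma Nr0_pos X : 0 < Nf (r0 X ^ 2).
Proof.
  apply (N_pos Nf HN). destruct (r0_bounds X). split. nra. nra.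
Qed.

Lemma r0_der X : is_derive r0 X (r0 X * Nf (r0 X ^ 2)).
Proof. destruct Hr0 as [Hd _]. apply Hd. Qed.

Lemma r0_cpt X : continuity_pt r0 X.
Proof.
  apply continuity_pt_filterlim. apply (ex_derive_continuous (K:=R_AbsRing) (V:=R_NormedModule)).
  eexists; apply r0_der.
Qed.

Lemma r0_le_half X : X <= 0 -> r0 X <= 1 / 2.
Proof.
  intros HX. destruct Hr0 as [_ H0].
  destruct (Req_dec X 0). subst; lra.
  destruct (MVT_gen r0 X 0 (fun t => r0 t * Nf (r0 t ^ 2))) as (y & _ & E).
  intros; apply r0_der. intros; apply r0_cpt.
  assert (0 < r0 y * Nf (r0 y ^ 2)) by (apply Rmult_lt_0_compat; [apply r0_bounds|apply Nr0_pos]).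
  nra.
Qed.

Lemma r0_small : exists a, 0 < a /\ forall X, X <= 0 -> r0 X <= 1 / 2 * exp (a * X).
Proof.
  exists (Nf (1/4)). split. apply (N_pos Nf HN); lra.
  intros X HX. destruct Hr0 as [_ H0].
  destruct (Req_dec X 0). subst. rewrite Rmult_0_r, exp_0. lra.
  destruct (MVT_gen (fun t => ln (r0 t)) X 0 (fun t => Nf (r0 t ^ 2))) as (y & Hy & E).
  { intros t _. assert (B := r0_bounds t). auto_derive. split. eexists; apply r0_der. split; [lra|auto].
    replace (Derive (fun x => r0 x) t) with (r0 t * Nf (r0 t ^ 2)) by (symmetry; apply is_derive_unique; apply r0_der).
    field. lra. }
  { intros t _. apply continuity_pt_filterlim.
    apply (ex_derive_continuous (K:=R_AbsRing) (V:=R_NormedModule) (fun t => ln (r0 t))).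
    assert (B := r0_bounds t). auto_derive. split. eexists; apply r0_der. split; [lra|auto]. }
  assert (Hy' : X <= y <= 0) by (unfold Rmin, Rmax in Hy; destruct (Rle_dec X 0); lra).
  assert (HNy : Nf (1/4) <= Nf (r0 y ^ 2)).
  { apply (N_le Nf HN). assert (B := r0_bounds y). nra.
    assert (B := r0_bounds y). assert (r0 y <= 1/2) by (apply r0_le_half; lra). nra. }
  rewrite H0 in E. assert (Nf (1/4) * (-X) <= Nf (r0 y ^ 2) * (-X)) by (apply Rmult_le_compat_r; lra).
  assert (ln (r0 X) <= ln (1/2) + Nf (1/4) * X) by lra.
  assert (B := r0_bounds X).
  rewrite <- (exp_ln (r0 X)) by lra.
  rewrite <- (exp_ln (1/2)) by lra. rewrite <- exp_plus.
  destruct (Req_dec (ln (r0 X)) (ln (1 / 2) + Nf (1 / 4) * X)) as [e|ne]. rewrite e; lra.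
  left. apply exp_increasing. lra.
Qed.

Definition Fint X := / 2 * ln (Nf (r0 X ^ 2)).

Lemma Fint_der X : is_derive Fint X (calNp Nf r0 X).
Proof.
  unfold Fint, calNp. assert (B := r0_bounds X). assert (P := Nr0_pos X).
  assert (P2 : 0 < r0 X ^ 2) by nra.
  auto_derive. rewrite (sqr_1 (r0 X)). split. apply (N_ex Nf HN); auto.
  split. eexists; apply r0_der. split; auto.
  replace (Derive (fun x => r0 x) X) with (r0 X * Nf (r0 X ^ 2)) by (symmetry; apply is_derive_unique; apply r0_der).
  rewrite (sqr_1 (r0 X)). set (D := Derive _ _). field. lra.
Qed.

Lemma calNp_cont X : continuous (calNp Nf r0) X.
Proof.
  apply (ex_derive_continuous (K:=R_AbsRing) (V:=R_NormedModule)).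
  unfold calNp. assert (B := r0_bounds X). assert (P2 : 0 < r0 X ^ 2) by nra.
  auto_derive. rewrite (sqr_1 (r0 X)). split. apply (N_ex2 Nf HN); auto.
  split. eexists; apply r0_der. split. eexists; apply r0_der. auto.
Qed.

Lemma r0sq_lim : filterlim (fun Y => r0 Y ^ 2) (Rbar_locally m_infty) (at_right 0).
Proof.
  destruct r0_small as (a & Ha & Hs).
  intros P [d HP].
  unfold filtermap. simpl.
  exists (Rmin 0 (ln d / (2 * a))). intros Y HY.
  assert (HY1 : Y < 0) by (eapply Rlt_le_trans; [exact HY|apply Rmin_l]).
  assert (HY2 : Y < ln d / (2 * a)) by (eapply Rlt_le_trans; [exact HY|apply Rmin_r]).
  assert (B := r0_bounds Y). assert (H1 := Hs Y ltac:(lra)).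
  assert (Hd := cond_pos d).
  assert (E1 : exp (2 * a * Y) < d).
  { rewrite <- (exp_ln d) by lra. apply exp_increasing.
    apply Rmult_lt_compat_l with (r := 2 * a) in HY2; [|lra].
    replace (2 * a * (ln d / (2 * a))) with (ln d) in HY2 by (field; lra). lra. }
  assert (E2 : exp (2 * a * Y) = exp (a * Y) * exp (a * Y)) by (rewrite <- exp_plus; f_equal; ring).
  assert (E3 : r0 Y ^ 2 < d).
  { assert (0 < exp (a * Y)) by apply exp_pos.
    assert (r0 Y * r0 Y <= (1/2 * exp (a * Y)) * (1/2 * exp (a * Y))) by (apply Rmult_le_compat; lra).
    simpl. nra. }
  apply HP. unfold ball; simpl. unfold AbsRing_ball, abs, minus, plus, opp; simpl.
  rewrite Ropp_0, Rplus_0_r. rewrite Rabs_right by nra. exact E3.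
  nra.
Qed.

Lemma Fint_lim : filterlim Fint (Rbar_locally m_infty) (locally 0).
Proof.
  unfold Fint.
  apply (filterlim_comp _ _ _ (fun Y => r0 Y ^ 2) (fun z => / 2 * ln (Nf z)) _ (at_right 0)).
  apply r0sq_lim.
  apply (filterlim_comp _ _ _ Nf (fun t => / 2 * ln t) _ (locally (Nf 0))).
  destruct HN as ((_ & _ & Hr) & _). exact Hr.
  destruct HN as (_ & _ & H0 & _). rewrite H0.
  replace 0 with (/ 2 * ln 1) by (rewrite ln_1; ring).
  apply (ex_derive_continuous (K:=R_AbsRing) (V:=R_NormedModule) (fun t => / 2 * ln t)).
  auto_derive. lra.
Qed.

Lemma RInt_F X : RInt_gen (calNp Nf r0) (Rbar_locally m_infty) (at_point X) = Fint X.
Proof.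
  apply (is_RInt_gen_unique (V:=R_CompleteNormedModule)
    (Fa:=Rbar_locally m_infty) (Fb:=at_point X)).
  replace (Fint X) with (Fint X - 0) by ring.
  apply (is_RInt_gen_ext (Derive Fint)).
  { apply (Filter_prod _ _ _ (fun _ => True) (fun _ => True)). exists 0; auto. reflexivity.
    intros a b _ _ x _. apply is_derive_unique, Fint_der. }
  apply is_RInt_gen_Derive.
  { apply (Filter_prod _ _ _ (fun _ => True) (fun _ => True)). exists 0; auto. reflexivity.
    intros a b _ _ x _. eexists; apply Fint_der. }
  { apply (Filter_prod _ _ _ (fun _ => True) (fun _ => True)). exists 0; auto. reflexivity.
    intros a b _ _ x _. eapply continuous_ext. intros t. symmetry. apply is_derive_unique, Fint_der.
    apply calNp_cont. }
  apply Fint_lim.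
  intros P HP. apply locally_singleton in HP. exact HP.
Qed.

Lemma kink_summary :
  (forall X, u (s * X) = r0 X * cs) /\ (forall X, v (s * X) = r0 X * sn) /\
  (forall X, u (s * X) ^ 2 + v (s * X) ^ 2 = r0 X ^ 2) /\
  (forall X, RInt_gen (calNp Nf r0) (Rbar_locally m_infty) (at_point X) = Fint X) /\
  (forall X, is_derive Fint X (calNp Nf r0 X)).
Proof.
  split. intros X; rewrite u_eq, r0_rho; auto.
  split. intros X; rewrite v_eq, r0_rho; auto.
  split. intros X; rewrite uv_r, r0_rho; auto.
  split. apply RInt_F. apply Fint_der.
Qed.

End Kink.

Lemma Cd_ok (f : R -> C) x (l l' : C) : CD f x l -> l = l' -> CD f x l'.
Proof. intros H ->; exact H. Qed.

Lemma Cd_cmul (k : C) (f : R -> C) x df : CD f x df -> CD (fun t => (k * f t)%C) x (k * df)%C.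
Proof.
  intros H. apply Cd_ok with (RtoC 0 * f x + k * df)%C.
  apply (Cd_mult (fun _ => k) f). apply Cd_const. exact H. ring.
Qed.

Lemma expi_mul (p q P Q : R) :
  Cmult (exp p * cos q, exp p * sin q) (exp P * cos Q, exp P * sin Q) =
  (exp (p + P) * cos (q + Q), exp (p + P) * sin (q + Q)).
Proof.
  apply injective_projections; simpl; rewrite exp_plus, ?cos_plus, ?sin_plus; ring.
Qed.

Lemma cz (c Y : R) (L : C) : (- (RtoC c * L * RtoC Y))%C = (-(c * fst L * Y), -(c * snd L * Y)).
Proof. destruct L; apply injective_projections; simpl; ring. Qed.

Lemma RtoC_expi (e : R) : RtoC (exp e) = (exp e * cos 0, exp e * sin 0).
Proof. rewrite cos_0, sin_0. apply injective_projections; simpl; ring. Qed.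

Theorem proposition8p7
  (N : R -> R) (HN : admissible_nonlinearity N)
  (c : R) (Hc0 : 0 <= c) (Hc1 : c < 1)
  (u v : R -> R) (Hkink : is_kink N c u v)
  (r0 : R -> R) (Hr0 : is_r0 N r0)
  (w : R -> R) (Hw : is_weight N c w)
  (lam : C) (Bt dBt : R -> C * C)
  (HBt_der : forall x, is_derive Bt x (dBt x))
  (HBt_L2 : L2_C2 Bt)
  (Heig : forall x, Lstar_w N c u v w Bt dBt x = vscale lam (Bt x))
  (beta B : R -> C * C)
  (Hbeta : forall X, Bt (sqrt (1 - c ^ 2) * X) = rotmx (theta c) (beta X))
  (HB : forall X,
     beta X =
     vscale (cexp (- (RtoC c * (lam / RtoC (sqrt (1 - c ^ 2))) * RtoC X))%C)
       (vscale (RtoC (exp (w (sqrt (1 - c ^ 2) * X)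
                           + RInt_gen (calNp N r0) (Rbar_locally m_infty) (at_point X))))
          (B X))) :
  let Lam := (lam / RtoC (sqrt (1 - c ^ 2)))%C in
  forall X : R,
    is_derive (fun Y => fst (B Y)) X
      (RtoC (calN0 N r0 X + calNp N r0 X) * fst (B X)
       + (Lam - RtoC (2 * c * calNp N r0 X)) * snd (B X))%C /\
    is_derive (fun Y => snd (B Y)) X
      (Lam * fst (B X) - RtoC (calN0 N r0 X + calNp N r0 X) * snd (B X))%C.
Proof.
  intros Lam X.
  rename N into Nf.
  destruct (kink_summary Nf HN c Hc0 Hc1 u v r0 Hkink Hr0) as (Hu & Hv & Huv & HI & HF).
  destruct (trig_facts c ltac:(lra)) as (Hcs & R2 & R1 & R3).
  set (s := sqrt (1 - c ^ 2)) in *.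
  set (cs := cos (theta c)) in *. set (sn := sin (theta c)) in *.
  assert (Hs : 0 < s) by (unfold s; apply sqrt_lt_R0; nra).
  fold Lam in HB.
  set (h := fun Y => c * fst Lam * Y - (w (s * Y) + Fint Nf r0 Y)).
  set (k := fun Y => c * snd Lam * Y).
  set (Ec := fun Y => (exp (h Y) * cos (k Y), exp (h Y) * sin (k Y))).
  assert (HBE : forall Y, fst (B Y) = (Ec Y * fst (beta Y))%C /\ snd (B Y) = (Ec Y * snd (beta Y))%C).
  { intros Y. rewrite HB. unfold vscale. simpl fst. simpl snd. rewrite HI.
    assert (K : (Ec Y * (cexp (- (RtoC c * Lam * RtoC Y)) * RtoC (exp (w (s * Y) + Fint Nf r0 Y)%R)))%C = RtoC 1).
    { rewrite RtoC_expi, cz. unfold cexp, Re, Im. cbn [fst snd]. rewrite expi_mul. unfold Ec. rewrite expi_mul.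
      unfold h, k.
      replace (c * fst Lam * Y - (w (s * Y) + Fint Nf r0 Y) + (- (c * fst Lam * Y) + (w (s * Y) + Fint Nf r0 Y))) with 0 by ring.
      replace (c * snd Lam * Y + (- (c * snd Lam * Y) + 0)) with 0 by ring.
      rewrite exp_0, cos_0, sin_0. apply injective_projections; simpl; ring. }
    split.
    - rewrite <- (Cmult_1_l (fst (B Y))) at 1. rewrite <- K. ring.
    - rewrite <- (Cmult_1_l (snd (B Y))) at 1. rewrite <- K. ring. }
  assert (Hsne : s <> 0) by lra.
  assert (Hbt : forall Y, fst (beta Y) = (RtoC (cs/s)%R * fst (Bt (s*Y)%R) - RtoC (sn/s)%R * snd (Bt (s*Y)%R))%C /\
                          snd (beta Y) = (RtoC (cs/s)%R * snd (Bt (s*Y)%R) - RtoC (sn/s)%R * fst (Bt (s*Y)%R))%C).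
  { intros Y. rewrite Hbeta. unfold rotmx, mv. fold cs sn. cbn [fst snd].
    assert (K1 : cs/s*cs - sn/s*sn = 1). { replace (cs/s*cs - sn/s*sn) with ((cs^2 - sn^2)/s) by (field; auto).
      rewrite R1. field; auto. }
    assert (K2 : cs/s*sn - sn/s*cs = 0) by (field; auto).
    split.
    - transitivity (RtoC (cs/s*cs - sn/s*sn)%R * fst (beta Y) + RtoC (cs/s*sn - sn/s*cs)%R * snd (beta Y))%C.
      rewrite K1, K2. ring. cdist. ring.
    - transitivity (RtoC (cs/s*sn - sn/s*cs)%R * fst (beta Y) + RtoC (cs/s*cs - sn/s*sn)%R * snd (beta Y))%C.
      rewrite K1, K2. ring. cdist. ring. }
  set (d1 := fst (dBt (s * X))). set (d2 := snd (dBt (s * X))).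
  assert (Hd1 : CD (fun t => fst (Bt (s * t))) X (RtoC s * d1)%C).
  { apply (Cd_scal (fun y => fst (Bt y))). apply (pd_fst Bt (s * X) (dBt (s * X)) (HBt_der (s * X))). }
  assert (Hd2 : CD (fun t => snd (Bt (s * t))) X (RtoC s * d2)%C).
  { apply (Cd_scal (fun y => snd (Bt y))). apply (pd_snd Bt (s * X) (dBt (s * X)) (HBt_der (s * X))). }
  assert (Kc : cs / s * s = cs) by (field; auto).
  assert (Ks : sn / s * s = sn) by (field; auto).
  assert (Hbd1 : CD (fun t => fst (beta t)) X (RtoC cs * d1 - RtoC sn * d2)%C).
  { apply (is_derive_ext (K:=R_AbsRing) (V:=C_R_NormedModule))
      with (fun t => (RtoC (cs/s)%R * fst (Bt (s*t)%R) - RtoC (sn/s)%R * snd (Bt (s*t)%R))%C).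
    intros t; symmetry; apply Hbt.
    apply Cd_ok with (RtoC (cs/s)%R * (RtoC s * d1) - RtoC (sn/s)%R * (RtoC s * d2))%C.
    apply Cd_minus; apply Cd_cmul; auto.
    rewrite <- Kc, <- Ks at 2. cdist. ring. }
  assert (Hbd2 : CD (fun t => snd (beta t)) X (RtoC cs * d2 - RtoC sn * d1)%C).
  { apply (is_derive_ext (K:=R_AbsRing) (V:=C_R_NormedModule))
      with (fun t => (RtoC (cs/s)%R * snd (Bt (s*t)%R) - RtoC (sn/s)%R * fst (Bt (s*t)%R))%C).
    intros t; symmetry; apply Hbt.
    apply Cd_ok with (RtoC (cs/s)%R * (RtoC s * d2) - RtoC (sn/s)%R * (RtoC s * d1))%C.
    apply Cd_minus; apply Cd_cmul; auto.
    rewrite <- Kc, <- Ks at 2. cdist. ring. }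
  set (hd := c * fst Lam - (s * Derive w (s * X) + calNp Nf r0 X)).
  set (kd := c * snd Lam).
  assert (HEd : CD Ec X (Cmult (hd, kd) (Ec X))).
  { unfold Ec. apply Cd_expi.
    - unfold h, hd. set (a := c * fst Lam). clearbody a. destruct Hw as (Hw1 & _).
      assert (ew : ex_derive w (s * X)) by exact (Hw1 1%nat (s * X)).
      assert (eF : ex_derive (Fint Nf r0) X) by (eexists; apply HF).
      auto_derive. tauto.
      replace (Derive (fun x => Fint Nf r0 x) X) with (calNp Nf r0 X)
        by (symmetry; apply is_derive_unique; apply HF).
      set (D := Derive _ (s * X)). ring.
    - unfold k, kd. set (a := c * snd Lam). clearbody a. auto_derive. auto. ring. }
  pose proof (f_equal fst (Heig (s * X))) as E1.
  pose proof (f_equal snd (Heig (s * X))) as E2.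
  unfold Lstar_w, vadd, mv, vsub, vscale, Astar in E1, E2. cbn [fst snd] in E1, E2.
  rewrite Huv in E1, E2.
  assert (Hlam : lam = (RtoC s * Lam)%C).
  { unfold Lam, Cdiv. rewrite Cmult_comm, <- Cmult_assoc, Cinv_l. ring.
    intros E. apply Hsne. injection E; auto. }
  assert (Hb1 : fst (Bt (s * X)) = (RtoC cs * fst (beta X) + RtoC sn * snd (beta X))%C).
  { rewrite Hbeta. reflexivity. }
  assert (Hb2 : snd (Bt (s * X)) = (RtoC sn * fst (beta X) + RtoC cs * snd (beta X))%C).
  { rewrite Hbeta. reflexivity. }
  unshelve epose proof (alg c s cs sn (r0 X) (u (s * X)) (v (s * X)) (Nf (r0 X ^ 2))
     (Derive Nf (r0 X ^ 2)) (Derive w (s * X)) _ _ _ _ lam Lam _ _ _ _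
     (fst (beta X)) (snd (beta X)) Hs R1 R2 R3 (Hu X) (Hv X) Hlam _ _ _ _ Hb1 Hb2 E1 E2) as [G1 G2];
    try reflexivity; try ring.
  assert (Hhk : (hd, kd) = (RtoC c * Lam - RtoC (s * Derive w (s * X) + calNp Nf r0 X))%C).
  { unfold hd, kd. apply injective_projections; simpl; ring. }
  rewrite Hhk in HEd.
  destruct (HBE X) as [HB1 HB2].
  split.
  - apply (is_derive_ext (K:=R_AbsRing) (V:=C_R_NormedModule)) with (fun Y => (Ec Y * fst (beta Y))%C).
    intros Y; symmetry; apply HBE.
    apply Cd_ok with ((RtoC c * Lam - RtoC (s * Derive w (s * X) + calNp Nf r0 X)) * Ec X * fst (beta X)
       + Ec X * (RtoC cs * d1 - RtoC sn * d2))%C.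
    apply (Cd_mult Ec (fun Y => fst (beta Y))); auto.
    fold d1 d2 in G1. rewrite G1, HB1, HB2. unfold calN0, calNp. cdist. ring.
  - apply (is_derive_ext (K:=R_AbsRing) (V:=C_R_NormedModule)) with (fun Y => (Ec Y * snd (beta Y))%C).
    intros Y; symmetry; apply HBE.
    apply Cd_ok with ((RtoC c * Lam - RtoC (s * Derive w (s * X) + calNp Nf r0 X)) * Ec X * snd (beta X)
       + Ec X * (RtoC cs * d2 - RtoC sn * d1))%C.
    apply (Cd_mult Ec (fun Y => snd (beta Y))); auto.
    fold d1 d2 in G2. rewrite G2, HB1, HB2. unfold calN0, calNp. cdist. ring.
Qed.
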